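(* Let $\eta>0$ and let $\mathcal{H}$ be the Paley-Wiener space on $\mathbb{R}^d$ with parameter $\eta$ (functions in $\mathcal{L}^2(\mathbb{R}^d)$ whose Fourier transform is supported in $[-\eta,\eta]^d$), and let $f_*\in\mathcal{H}$. Let $K\ge 2$, $\gamma\in(0,1)$, and let $C_1,\dots,C_K\subseteq\mathcal{H}$ be random confidence regions such that $\mathbb{P}(f_*\in C_k)\ge 1-\gamma$ for every $k\in\{1,\dots,K\}$. For each $k$ and each $x\in\mathbb{R}^d$ let $$I_1^{(k)}(x)=\min_{f\in C_k} f(x),\qquad I_2^{(k)}(x)=\max_{f\in C_k} f(x)$$ (assumed to exist). Let $w=(w_1,\dots,w_K)\in[0,1]^K$ with $\sum_{k=1}^K w_k=1$ be fixed weights, and for each $x_0\in\mathbb{R}^d$ define the per-input majority-vote set $$\mathcal{C}(w,1/2,x_0)\doteq\Big\{y\in\mathbb{R}:\ \sum_{k=1}^K w_k\,\mathbb{I}\big(y\in[I_1^{(k)}(x_0),I_2^{(k)}(x_0)]\big)>1/2\Big\}.$$ Then the resulting band has simultaneous coverage: $$\mathbb{P}\big(\forall x_0\in\mathbb{R}^d:\ f_*(x_0)\in\mathcal{C}(w,1/2,x_0)\big)\ge 1-2\gamma.$$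
   Context: In the paper, $C_k$ is the Paley-Wiener kernel-based confidence region for the unknown regression function $f_*$ built from the $k$-th random subsample (random permutation) of an i.i.d. input-output sample, with $\gamma=\alpha+\beta$; $[I_1^{(k)}(x),I_2^{(k)}(x)]$ is the resulting confidence interval for $f_*(x)$ at query input $x$. $\mathbb{I}$ denotes the indicator function. The case of equal weights $w_k=1/K$ is the standard majority vote. *)

(* Defs.v *)
From HB Require Import structures.
From mathcomp Require Import all_boot all_order all_algebra.
From mathcomp Require Import all_classical all_reals all_analysis.
Set Implicit Arguments. Unset Strict Implicit. Unset Printing Implicit Defensive.
Import Order.TTheory GRing.Theory Num.Theory.
Local Open Scope classical_set_scope.
Local Open Scope ring_scope.

(* Iterated Lebesgue integral over D^n (D a subset of R) of a function of the
   first n coordinates of a sequence; [a] is the accumulator of already-fixed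
   coordinates. Coordinate n-1 is integrated outermost. *)
Fixpoint iter_int (R : realType) (D : set R) (n : nat)
  (F : (nat -> R) -> \bar R) (a : nat -> R) : \bar R :=
  match n with
  | 0 => F a
  | n'.+1 => (\int[@lebesgue_measure R]_(t in D)
                iter_int D n' F (fun i => if i == n' then t else a i))%E
  end.

Definition int_pow (R : realType) (D : set R) (d : nat)
  (G : 'rV[R]_d -> \bar R) : \bar R :=
  iter_int D d (fun a => G (\row_(i < d) a (nat_of_ord i))) (fun _ => 0).

Definition dotv (R : realType) (d : nat) (u v : 'rV[R]_d) : R :=
  \sum_(i < d) u 0 i * v 0 i.

Definition sym_itv (R : realType) (eta : R) : set R := `[- eta, eta].

(* Paley-Wiener space with parameter eta on R^d (real-valued functions):
   f is square integrable on R^d and f is the inverse Fourier transform of a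
   function g = a + i b that is square integrable on [-eta,eta]^d and vanishes
   outside it, i.e. f(x) = int_{[-eta,eta]^d} g(w) e^{i w.x} dw (the
   normalising constant is absorbed into g); the imaginary part of this
   integral vanishes since f is real-valued. *)
Definition paley_wiener (R : realType) (d : nat) (eta : R)
  : set ('rV[R]_d -> R) :=
  [set f | (int_pow setT (fun x => ((f x) ^+ 2)%:E) < +oo)%E /\
     exists a b : 'rV[R]_d -> R,
       (int_pow (sym_itv eta) (fun w => ((a w) ^+ 2 + (b w) ^+ 2)%:E) < +oo)%E /\
       (forall x, (f x)%:E =
          int_pow (sym_itv eta) (fun w =>
            (a w * cos (dotv w x) - b w * sin (dotv w x))%:E)) /\
       (forall x, 0%E =
          int_pow (sym_itv eta) (fun w =>
            (a w * sin (dotv w x) + b w * cos (dotv w x))%:E))].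

Definition in_itv_ind (R : realType) (l u y : R) : R :=
  (((l <= y) && (y <= u)) : nat)%:R.

Definition vote_set (R : realType) (K : nat) (w : 'I_K -> R) (tau : R)
  (I1 I2 : 'I_K -> R) : set R :=
  [set y | \sum_(k < K) w k * in_itv_ind (I1 k) (I2 k) y > tau].

(* Main.v *)
Require Import Defs.
From HB Require Import structures.
From mathcomp Require Import all_boot all_order all_algebra.
From mathcomp Require Import all_classical all_reals all_analysis.
From mathcomp Require Import lra measurable_realfun.
Import Order.TTheory GRing.Theory Num.Theory.
Local Open Scope classical_set_scope.
Local Open Scope ring_scope.

Lemma aux (R : realType) (r g : R) : 1/2*(1-r) <= g -> 1 - 2*g <= r.
Proof. move=> h. rewrite mulrBr mulr1 in h. lra. Qed.

Theorem mainTheorem2 (R : realType) (d : nat) (eta : R)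
  (dT : measure_display) (T : measurableType dT) (P : probability T R)
  (fstar : 'rV[R]_d -> R) (K : nat) (gamma : R)
  (C : 'I_K -> T -> set ('rV[R]_d -> R))
  (I1 I2 : T -> 'I_K -> 'rV[R]_d -> R) (w : 'I_K -> R) :
  0 < eta ->
  paley_wiener eta fstar ->
  (2 <= K)%N ->
  0 < gamma < 1 ->
  (forall k om, C k om `<=` paley_wiener eta) ->
  (forall k, measurable [set om | C k om fstar]) ->
  (forall k, (P [set om | C k om fstar] >= (1 - gamma)%:E)%E) ->
  (forall om k x, (exists2 f, C k om f & f x = I1 om k x) /\
                  (forall f, C k om f -> I1 om k x <= f x)) ->
  (forall om k x, (exists2 f, C k om f & f x = I2 om k x) /\
                  (forall f, C k om f -> f x <= I2 om k x)) ->
  (forall k, 0 <= w k <= 1) ->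
  \sum_(k < K) w k = 1 ->
  measurable [set om | forall x0,
     vote_set w (1 / 2) (fun k => I1 om k x0) (fun k => I2 om k x0) (fstar x0)] ->
  (P [set om | forall x0,
     vote_set w (1 / 2) (fun k => I1 om k x0) (fun k => I2 om k x0) (fstar x0)]
   >= (1 - 2 * gamma)%:E)%E.
Proof.
move=> _ _ _ /andP[g0 g1] _ mC PC hI1 hI2 w01 w1 mA.
set A := [set om | _ ].
pose N k := ~` [set om | C k om fstar].
have mN k : measurable (N k) by apply: measurableC.
have w0 k : 0 <= w k by case/andP: (w01 k).
have key om : ~ A om -> 1/2 <= \sum_(k < K) w k * \1_(N k) om.
  move=> /existsNP [x0 /negP]; rewrite /vote_set /= -leNgt => hS.
  have : \sum_(k < K) w k <= \sum_(k < K) (w k * \1_(N k) om +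
     w k * in_itv_ind (I1 om k x0) (I2 om k x0) (fstar x0)).
    apply: ler_sum => k _.
    have [Ck|nCk] := pselect (C k om fstar).
      have -> : in_itv_ind (I1 om k x0) (I2 om k x0) (fstar x0) = 1.
        rewrite /in_itv_ind ((hI1 om k x0).2 _ Ck) ((hI2 om k x0).2 _ Ck) //.
      rewrite mulr1 lerDr mulr_ge0 //.
    rewrite indicE mem_set // mulr1 lerDl mulr_ge0 // /in_itv_ind ler0n //.
  rewrite big_split /= w1 => h.
  have h2 : (1:R) = 1/2 + 1/2 by rewrite -splitr.
  lra.
have PN k : (P (N k) <= gamma%:E)%E.
  rewrite /N probability_setC //.
  have := PC k; have : (P [set om | C k om fstar] <= 1)%E by apply: probability_le1.
  have : (0 <= P [set om | C k om fstar])%E by apply: measure_ge0.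
  case: (P _) => [r||] //=; rewrite !lee_fin => ? ? ?.
  lra.
pose g om := (\sum_(k < K) (w k)%:E * (\1_(N k) om)%:E)%E.
have mg k : measurable_fun setT (fun om => ((w k)%:E * (\1_(N k) om)%:E)%E).
  apply: measurable_funeM; apply/measurable_EFinP; exact: measurable_indic.
have intg : (\int[P]_(om in setT) g om <= gamma%:E)%E.
  rewrite /g ge0_integral_sum //; last first.
    by move=> k om _; apply: mule_ge0; rewrite lee_fin.
  apply: (@le_trans _ _ (\sum_(k < K) (w k)%:E * gamma%:E)%E).
    apply: lee_sum => k _.
    have f10 : forall om, setT om -> (0 <= (\1_(N k) om : R)%:E)%E by move=> x Hx; rewrite lee_fin.
    have mf1 : measurable_fun setT (fun om => (\1_(N k) om : R)%:E).
      by apply/measurable_EFinP; exact: measurable_indic.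
    rewrite (@ge0_integralZl_EFin _ _ _ P setT measurableT _ f10 mf1 (w k) (w0 k)).
    rewrite integral_indic // setIT.
    by apply: lee_wpmul2l; [rewrite lee_fin | exact: PN].
  rewrite (eq_bigr (fun k => (w k * gamma)%:E)); last by move=> *; rewrite EFinM.
  by rewrite sumEFin -mulr_suml w1 mul1r.
have mA' : measurable (~` A) by apply: measurableC.
have h1 : (\int[P]_(om in setT) ((1/2)%:E * (\1_(~` A) om : R)%:E) <= gamma%:E)%E.
  apply: le_trans intg.
  apply: ge0_le_integral => //.
  - apply: measurable_funeM; apply/measurable_EFinP; exact: measurable_indic.
  - by apply: emeasurable_sum => k _; exact: mg.
  move=> om Hom; rewrite /g sumEFin -EFinM lee_fin indicE.
  have [Aom|nAom] := pselect (A om).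
    rewrite memNset ?mulr0; last by move=> /(_ Aom).
    by apply: sumr_ge0 => k _; apply: mulr_ge0 => //.
  rewrite mem_set // mulr1; exact: key.
have f10 : forall om, setT om -> (0 <= (\1_(~` A) om : R)%:E)%E by move=> x Hx; rewrite lee_fin.
have mf1 : measurable_fun setT (fun om => (\1_(~` A) om : R)%:E).
  by apply/measurable_EFinP; exact: measurable_indic.
have h2 : (0 <= 1/2 :> R) by lra.
rewrite (@ge0_integralZl_EFin _ _ _ P setT measurableT _ f10 mf1 _ h2) in h1.
rewrite integral_indic // setIT in h1.
have h3 : ((1/2)%:E * (1 - P A) <= gamma%:E)%E.
  rewrite -(probability_setC P mA); exact: h1.
move: h3; have : (P A <= 1)%E by apply: probability_le1.
have : (0 <= P A)%E by apply: measure_ge0.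
case: (P A) => [r||] //=; rewrite !lee_fin => _ _ h.
exact: aux.
Qed.
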